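(* Let $K$ be a connected simplicial complex with $d$ vertices $v_1,\ldots,v_d$. Let $0\leq a_1<\cdots<a_d$ be integers such that whenever $a_j-a_i=a_{j'}-a_{i'}$ (for indices $i,j,i',j'\in\{1,\ldots,d\}$) we have $i=j$ or $j=j'$. Let $n>2a_d$ be an integer coprime to all differences $a_j-a_i$ with $j>i$. Let $\widetilde{K}$ be the simplicial complex with vertex set $\mathbb{Z}/n$ whose faces are all sets of the form $\{x+a_{i_1},\ldots,x+a_{i_k}\}$ (addition modulo $n$) where $x\in\mathbb{Z}/n$ and $\{v_{i_1},\ldots,v_{i_k}\}$ is a face of $K$. Then $\widetilde{K}$ is a cluster of $n$ subcomplexes, each isomorphic to $K$.
   Context: A finite simplicial complex $X$ is a cluster of $X_1,\ldots,X_k$ (its parts) if $X_1,\ldots,X_k$ are induced subcomplexes of $X$ with $X=X_1\cup\cdots\cup X_k$ and such that for all $i\neq j$ the intersection $X_i\cap X_j$ is either empty or consists of a single vertex. *)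

(* Defs.v *)
From mathcomp Require Import all_boot all_order all_algebra.
Set Implicit Arguments. Unset Strict Implicit. Unset Printing Implicit Defensive.

Section Complexes.
Variable V : finType.

Definition is_complex (X : {set {set V}}) : Prop :=
  set0 \notin X /\
  (forall s t : {set V}, s \in X -> t \subset s -> t != set0 -> t \in X).

Definition is_complex_on (X : {set {set V}}) : Prop :=
  is_complex X /\ (forall v : V, [set v] \in X).

Definition vertices (X : {set {set V}}) : {set V} := \bigcup_(s in X) s.

Definition connected_complex (X : {set {set V}}) : Prop :=
  vertices X != set0 /\
  (forall u v, u \in vertices X -> v \in vertices X ->
     connect (fun x y => [set x; y] \in X) u v).

Definition induced_subcomplex (Y X : {set {set V}}) : Prop :=
  Y \subset X /\ Y = [set s in X | s \subset vertices Y].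

Definition is_cluster (k : nat) (X : {set {set V}}) (P : 'I_k -> {set {set V}}) : Prop :=
  (forall i, induced_subcomplex (P i) X) /\
  X = \bigcup_(i < k) P i /\
  (forall i j, i != j ->
     P i :&: P j = set0 \/ exists v : V, P i :&: P j = [set [set v]]).

Definition iso_complex (W : finType) (K : {set {set W}}) (Y : {set {set V}}) : Prop :=
  exists f : W -> V, injective f /\ f @: [set: W] = vertices Y /\
    (forall s : {set W}, (s \in K) = (f @: s \in Y)).

End Complexes.

Definition tilde_complex (n d : nat) (a : 'I_d -> nat) (K : {set {set 'I_d}})
  : {set {set 'I_n}} :=
  [set F : {set 'I_n} | [exists x : 'I_n, exists s in K,
     F == [set y : 'I_n | [exists i in s, (y : nat) == (x + a i) %% n]]]].

(* Main.v *)
Require Import Defs.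
From mathcomp Require Import all_boot all_order all_algebra.
From mathcomp Require Import zify.
Import GRing.Theory.
Set Implicit Arguments. Unset Strict Implicit. Unset Printing Implicit Defensive.

Lemma mod2 (N m : nat) : (m < 2*N)%N -> m %% N = (if (m < N)%N then m else m - N).
Proof. move=> h. case: ifP => h2; first by rewrite modn_small.
have -> : m = (m - N) + N by lia. rewrite modnDr modn_small; lia. Qed.
Lemma ar (N M x y p q r s : nat) : (x < N)%N -> (y < N)%N -> (2*M < N)%N -> (p <= M)%N -> (q <= M)%N -> (r <= M)%N -> (s <= M)%N ->
  (x+p)%%N = (y+q)%%N -> (x+r)%%N = (y+s)%%N -> r + q = p + s.
Proof. move=> h1 h2 h3 h4 h5 h6 h7. rewrite !mod2; try lia.
 do 4 case: ifP; lia. Qed.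
Lemma ar2 (N x p q : nat) : (x < N)%N -> (p < N)%N -> (q < N)%N -> (x+p)%%N = (x+q)%%N -> p = q.
Proof. move=> h1 h2 h3. rewrite !mod2; try lia. do 2 case: ifP; lia. Qed.
Lemma ar2' (N x y p : nat) : (x < N)%N -> (y < N)%N -> (p < N)%N -> (x+p)%%N = (y+p)%%N -> x = y.
Proof. move=> h1 h2 h3. rewrite !mod2; try lia. do 2 case: ifP; lia. Qed.
Lemma ar3 (p q r s : nat) : r + q = p + s -> ((r%:Z - p%:Z)%R = (s%:Z - q%:Z)%R).
Proof. move=> *. lia. Qed.

Definition fx (n d : nat) (a : 'I_d -> nat) (x : 'I_n.+1) (i : 'I_d) : 'I_n.+1 :=
  Ordinal (ltn_pmod (x + a i) (ltn0Sn n)).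

Definition Pt (n d : nat) (a : 'I_d -> nat) (K : {set {set 'I_d}}) (x : 'I_n.+1)
  : {set {set 'I_n.+1}} := [set (fx a x) @: s | s : {set 'I_d} in K].

Lemma coll (n d M : nat) (a : 'I_d -> nat) :
  injective a ->
  (forall i j i' j' : 'I_d,
     ((a j)%:Z - (a i)%:Z = (a j')%:Z - (a i')%:Z)%R -> i = j \/ j = j') ->
  (forall i, a i <= M)%N -> (2 * M < n.+1)%N ->
  forall (x y : 'I_n.+1) i j k l, fx a x i = fx a y k -> fx a x j = fx a y l -> i != j ->
  x = y /\ i = k.
Proof.
move=> Hinj Hsid HM HMn x y i j k l /(congr1 val) /= e1 /(congr1 val) /= e2 nij.
have := ar (ltn_ord x) (ltn_ord y) HMn (HM i) (HM k) (HM j) (HM l) e1 e2.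
move=> /ar3 /Hsid [eij|ejl]; first by rewrite eij eqxx in nij.
subst l.
have eik : a k = a i by move: (ar (ltn_ord x) (ltn_ord y) HMn (HM i) (HM k) (HM j) (HM j) e1 e2); lia.
have ik := Hinj _ _ eik. subst k. split=> //.
apply: val_inj. apply: (ar2' (ltn_ord x) (ltn_ord y) _ e1); have := HM i; lia.
Qed.

Lemma fx_inj (n d : nat) (a : 'I_d -> nat) (x : 'I_n.+1) :
  injective a -> (forall i, a i < n.+1)%N -> injective (fx a x).
Proof.
move=> Hinj Hb i j /(congr1 val) /= e. apply: Hinj.
exact: (ar2 (ltn_ord x) (Hb i) (Hb j) e).
Qed.

Lemma vertsP (n d : nat) (a : 'I_d -> nat) (K : {set {set 'I_d}}) (x : 'I_n.+1) :
  is_complex_on K -> vertices (Pt a K x) = fx a x @: setT.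
Proof.
move=> [_ Hs]. apply/setP => v. apply/bigcupP/imsetP.
- move=> [F /imsetP [s _ ->] /imsetP [i _ ->]]. by exists i.
- move=> [i _ ->]. exists (fx a x @: [set i]); first by apply/imsetP; exists [set i].
  by rewrite imset_set1 inE.
Qed.

Lemma shiftE (n d : nat) (a : 'I_d -> nat) (x : 'I_n.+1) (s : {set 'I_d}) :
  [set y : 'I_n.+1 | [exists i in s, (y:nat) == (x + a i) %% n.+1]] = fx a x @: s.
Proof.
apply/setP => y. rewrite inE. apply/existsP/imsetP.
- move=> [i /andP [Hi /eqP e]]. exists i => //. exact: val_inj.
- move=> [i Hi ->]. exists i. by rewrite Hi eqxx.
Qed.

Lemma tildeE (n d : nat) (a : 'I_d -> nat) (K : {set {set 'I_d}}) :
  tilde_complex n.+1 a K = \bigcup_(x < n.+1) Pt a K x.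
Proof.
apply/setP => F. rewrite inE. apply/existsP/bigcupP.
- move=> [x /existsP [s /andP [Hs /eqP ->]]]. exists x => //.
  rewrite shiftE. by apply/imsetP; exists s.
- move=> [x _ /imsetP [s Hs ->]]. exists x. apply/existsP. exists s.
  by rewrite Hs shiftE eqxx.
Qed.

Section Main.
End Main.

Lemma induced_P (n d M : nat) (a : 'I_d -> nat) (K : {set {set 'I_d}}) (x : 'I_n.+1) :
  is_complex_on K -> injective a ->
  (forall i j i' j' : 'I_d,
     ((a j)%:Z - (a i)%:Z = (a j')%:Z - (a i')%:Z)%R -> i = j \/ j = j') ->
  (forall i, a i <= M)%N -> (2 * M < n.+1)%N ->
  induced_subcomplex (Pt a K x) (tilde_complex n.+1 a K).
Proof.
move=> Hc Hinj Hsid HM HMn. split.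
  by rewrite tildeE; apply: (bigcup_sup x).
apply/setP => F. rewrite inE vertsP // tildeE. apply/idP/andP.
  move=> HF. split; first by apply/bigcupP; exists x.
  move: HF => /imsetP [s _ ->]. exact: imsetS (subsetT _).
move=> [/bigcupP [y _ /imsetP [t Ht ->]] Hsub].
have t0 : t != set0 by apply: contraTneq Ht => ->; case: Hc => [[]].
case/set0Pn: t0 => i Hi.
have /imsetP [k _ ek] : fx a y i \in fx a x @: setT by apply: (subsetP Hsub); apply: imset_f.
case: (boolP [exists j in t, j != i]).
  move=> /existsP [j /andP [Hj nji]].
  have /imsetP [l _ el] : fx a y j \in fx a x @: setT by apply: (subsetP Hsub); apply: imset_f.
  have nij : i != j by rewrite eq_sym.
  have [exy _] := coll Hinj Hsid HM HMn ek el nij.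
  subst y; by apply: imset_f.
move=> /existsPn Hn.
have -> : t = [set i].
  apply/setP => j. rewrite inE. apply/idP/eqP => [Hj|->] //.
  by have := Hn j; rewrite Hj /= => /negPn/eqP.
rewrite imset_set1 ek -imset_set1. apply: imset_f.
case: Hc => _ H1. exact: H1.
Qed.

Lemma single_P (n d M : nat) (a : 'I_d -> nat) (K : {set {set 'I_d}}) (x y : 'I_n.+1) F :
  is_complex_on K -> injective a ->
  (forall i j i' j' : 'I_d,
     ((a j)%:Z - (a i)%:Z = (a j')%:Z - (a i')%:Z)%R -> i = j \/ j = j') ->
  (forall i, a i <= M)%N -> (2 * M < n.+1)%N -> x != y ->
  F \in Pt a K x -> F \in Pt a K y ->
  exists i k, F = [set fx a x i] /\ fx a x i = fx a y k.
Proof.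
move=> Hc Hinj Hsid HM HMn nxy /imsetP [s Hs ->] /imsetP [t Ht eF].
have s0 : s != set0 by apply: contraTneq Hs => ->; case: Hc => [[]].
case/set0Pn: s0 => i Hi.
have /imsetP [k _ ek] : fx a x i \in fx a y @: t by rewrite -eF; apply: imset_f.
exists i, k; split=> //.
case: (boolP [exists j in s, j != i]).
  move=> /existsP [j /andP [Hj nji]].
  have /imsetP [l _ el] : fx a x j \in fx a y @: t by rewrite -eF; apply: imset_f.
  have nij : i != j by rewrite eq_sym.
  have [exy _] := coll Hinj Hsid HM HMn ek el nij.
  by rewrite exy eqxx in nxy.
move=> /existsPn Hn.
have -> : s = [set i].
  apply/setP => j. rewrite inE. apply/idP/eqP => [Hj|->] //.
  by have := Hn j; rewrite Hj /= => /negPn/eqP.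
by rewrite imset_set1.
Qed.

Lemma inter_P (n d M : nat) (a : 'I_d -> nat) (K : {set {set 'I_d}}) (x y : 'I_n.+1) :
  is_complex_on K -> injective a ->
  (forall i j i' j' : 'I_d,
     ((a j)%:Z - (a i)%:Z = (a j')%:Z - (a i')%:Z)%R -> i = j \/ j = j') ->
  (forall i, a i <= M)%N -> (2 * M < n.+1)%N -> x != y ->
  Pt a K x :&: Pt a K y = set0 \/ exists v, Pt a K x :&: Pt a K y = [set [set v]].
Proof.
move=> Hc Hinj Hsid HM HMn nxy.
case: (set_0Vmem (Pt a K x :&: Pt a K y)) => [->|[F]]; first by left.
rewrite inE => /andP [F1 F2]. right.
have [i [k [eF ek]]] := single_P Hc Hinj Hsid HM HMn nxy F1 F2.
exists (fx a x i). apply/setP => G. rewrite !inE. apply/andP/eqP.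
  move=> [G1 G2].
  have [j [l [eG el]]] := single_P Hc Hinj Hsid HM HMn nxy G1 G2.
  rewrite eG. case: (eqVneq i j) => [->//|nij].
  have [exy _] := coll Hinj Hsid HM HMn ek el nij.
  by rewrite exy eqxx in nxy.
move=> ->. by rewrite -eF.
Qed.

Theorem proposition3p1 (d : nat) (K : {set {set 'I_d}}) (a : 'I_d -> nat) (n : nat) :
  is_complex_on K ->
  connected_complex K ->
  (forall i j : 'I_d, (i < j)%N -> (a i < a j)%N) ->
  (forall i j i' j' : 'I_d,
     ((a j)%:Z - (a i)%:Z = (a j')%:Z - (a i')%:Z)%R -> i = j \/ j = j') ->
  (2 * \max_(i < d) a i < n)%N ->
  (forall i j : 'I_d, (i < j)%N -> coprime n (a j - a i)) ->
  exists P : 'I_n -> {set {set 'I_n}},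
    is_cluster (tilde_complex n a K) P /\ (forall x : 'I_n, iso_complex K (P x)).
Proof.
move=> Hc _ Hmono Hsid.
case: n => [|n]; first by rewrite ltn0.
move=> HMn _.
set M := \max_(i < d) a i in HMn.
have HM : forall i, (a i <= M)%N by move=> i; apply: leq_bigmax.
have Hinj : injective a.
  move=> i j e. case: (ltngtP i j) => h.
  - by have := Hmono _ _ h; rewrite e ltnn.
  - by have := Hmono _ _ h; rewrite e ltnn.
  - exact: val_inj.
have Hb : forall i, (a i < n.+1)%N by move=> i; have := HM i; lia.
exists (Pt a K). split.
  split; first by move=> x; exact: (induced_P x Hc Hinj Hsid HM HMn).
  split; first exact: tildeE.
  move=> x y nxy. exact: (inter_P Hc Hinj Hsid HM HMn nxy).
move=> x. exists (fx a x). split; first exact: fx_inj.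
split; first by rewrite vertsP.
move=> s. apply/idP/imsetP => [Hs|[t Ht e]]; first by exists s.
by rewrite (imset_inj (fx_inj (x:=x) Hinj Hb) e).
Qed.
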